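(* Let $A=(0,0)$ and $B=(b_1,b_2)$ with $b_1>0$ and $0\le b_2\le b_1-1$. Let $s=b_2/b_1$, let $k\in(0,1)$, let $Q=(1-s)(1,0)+s(3/2,1/2)$ and $P=(1-k)(1,1)+kQ$, and let $\gamma(t)=Bt^3+3Pt^2(1-t)+3Pt(1-t)^2$ for $0\le t\le1$. Then $\gamma(t)$ lies in the region $\{(x,y): x>y>0\}$ for every $t\in(0,1)$.
   Context: $\gamma$ is the cubic B\'ezier curve with endpoints $A=\gamma(0)$ and $B=\gamma(1)$ and with both inner control points equal to $P$. *)

(* Defs.v *)
From Stdlib Require Import Reals.
Open Scope R_scope.

Definition pt := (R * R)%type.

Definition lerp (s : R) (X Y : pt) : pt :=
  ((1 - s) * fst X + s * fst Y, (1 - s) * snd X + s * snd Y).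

Definition bezier3 (A P1 P2 B : pt) (t : R) : pt :=
  ( (1 - t)^3 * fst A + 3 * t * (1 - t)^2 * fst P1 + 3 * t^2 * (1 - t) * fst P2 + t^3 * fst B,
    (1 - t)^3 * snd A + 3 * t * (1 - t)^2 * snd P1 + 3 * t^2 * (1 - t) * snd P2 + t^3 * snd B ).

Definition in_region (X : pt) : Prop := fst X > snd X /\ snd X > 0.

(* Main.v *)
Require Import Defs.
From Stdlib Require Import Reals Lra Psatz.
Open Scope R_scope.

Theorem lemma7 (b1 b2 k : R) :
  b1 > 0 -> 0 <= b2 -> b2 <= b1 - 1 -> 0 < k < 1 ->
  let s := b2 / b1 in
  let Q := lerp s (1, 0) (3/2, 1/2) in
  let P := lerp k (1, 1) Q in
  forall t : R, 0 < t < 1 ->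
    in_region (bezier3 (0, 0) P P (b1, b2) t).
Proof.
  intros Hb1 Hb2 Hb12 Hk s Q P t Ht.
  assert (Hs : 0 <= s) by (unfold s; apply Rle_mult_inv_pos; lra).
  unfold in_region, bezier3, P, Q, lerp; simpl.
  assert (Ht1 : 0 < t * (1 - t)) by nra.
  assert (Ht3 : 0 < t * t * t) by (apply Rmult_lt_0_compat; nra).
  assert (Hpy : 0 < (1 - k) * 1 + k * ((1 - s) * 0 + s * (1 / 2))) by nra.
  assert (Hy : 0 < 3 * t * ((1 - t) * ((1 - t) * 1)) * ((1 - k) * 1 + k * ((1 - s) * 0 + s * (1 / 2)))
     + 3 * (t * (t * 1)) * (1 - t) * ((1 - k) * 1 + k * ((1 - s) * 0 + s * (1 / 2)))).
  { replace (3 * t * ((1 - t) * ((1 - t) * 1)) * ((1 - k) * 1 + k * ((1 - s) * 0 + s * (1 / 2)))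
     + 3 * (t * (t * 1)) * (1 - t) * ((1 - k) * 1 + k * ((1 - s) * 0 + s * (1 / 2))))
     with (3 * (t * (1 - t)) * ((1 - k) * 1 + k * ((1 - s) * 0 + s * (1 / 2)))) by ring.
    nra. }
  split.
  - assert (0 < 3 * (t*(1-t)) * k + t*t*t*(b1-b2)) by nra.
    nra.
  - nra.
Qed.
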